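(* Let $A\in\mathbb{R}^{n_x\times n_x}$, $B\in\mathbb{R}^{n_x\times m}$, $C\in\mathbb{R}^{n_y\times n_x}$ and $D\in\mathbb{R}^{n_y\times m}$, and let $0<\mu_y\le\nu_y$. Set $\alpha_y=\frac{\nu_y+\mu_y}{2}$ and $\beta_y=\frac{\nu_y-\mu_y}{2}$. Suppose there exist a symmetric matrix $Q\succ0$, matrices $U\in\mathbb{R}^{n_x\times n_x}$ and $V\in\mathbb{R}^{n_x\times n_y}$, and scalars $\eta>0$ and $\rho_o\in(0,1)$ such that $$\begin{bmatrix}(1-\rho_o)Q-\eta C^\mathsf{T}C & (UA+\alpha_yVC)^\mathsf{T} & 0\\ UA+\alpha_yVC & U+U^\mathsf{T}-Q & \beta_yV\\ 0 & \beta_yV^\mathsf{T} & \eta I\end{bmatrix}\succ0.$$ Then $U$ is invertible; set $L=U^{-1}V$. Let $\mathcal{S}_u:\mathbb{R}^m\to\mathbb{R}^m$ be arbitrary. Let $\mathcal{S}_y:\mathbb{R}^{n_y}\to\mathbb{R}^{n_y}$ be continuously differentiable with Jacobian satisfying $\|\mathcal{J}^y(z)-\alpha_yI\|\le\beta_y$ for all $z$. When $n_y=1$, this is equivalent to $\mu_y\le\mathcal{S}_y'(z)\le\nu_y$. Consider the SSM $x_{k+1}=Ax_k+B\mathcal{S}_u(u_k)$, $y_k=\mathcal{S}_y(Cx_k+D\mathcal{S}_u(u_k))$, together with the observer $$\hat x_{k+1}=A\hat x_k+B\mathcal{S}_u(u_k)+L(\hat y_k-y_k),\qquad \hat y_k=\mathcal{S}_y\big(C\hat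 x_k+D\mathcal{S}_u(u_k)\big).$$ Then for every input sequence $(u_k)$ and every pair of initial conditions $x_0,\hat x_0$, the following hold. (i) If $\hat x_0=x_0$, then $\hat x_k=x_k$ for all $k\ge0$. (ii) The estimation error converges exponentially: $$\|Q^{1/2}(\hat x_k-x_k)\|\le(1-\rho_o)^{k/2}\|Q^{1/2}(\hat x_0-x_0)\|\quad\text{for all }k\ge0.$$
   Context: $\|\cdot\|$ denotes the Euclidean norm and the induced spectral matrix norm. $M\succ0$ means $M$ is symmetric positive definite. The set $\{\alpha_yI+\beta_y\Delta:\|\Delta\|\le1\}$ is the uncertainty set the paper uses to cover Jacobians of $(\mu_y,\nu_y)$-bi-Lipschitz output nonlinearities $\mathcal{S}_y$. *)

(* Defs.v *)
From HB Require Import structures.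
From mathcomp Require Import all_boot all_order all_algebra.
From mathcomp Require Import all_classical all_reals all_analysis.
Set Implicit Arguments. Unset Strict Implicit. Unset Printing Implicit Defensive.
Import Order.TTheory GRing.Theory Num.Theory.
Import numFieldNormedType.Exports.
Local Open Scope ring_scope.

Definition posdef {R : realType} {n : nat} (M : 'M[R]_n) : Prop :=
  M^T = M /\ forall x : 'cV[R]_n, x != 0 -> 0 < (x^T *m M *m x) 0 0.

Definition possemidef {R : realType} {n : nat} (M : 'M[R]_n) : Prop :=
  M^T = M /\ forall x : 'cV[R]_n, 0 <= (x^T *m M *m x) 0 0.

Definition enorm {R : realType} {n : nat} (v : 'cV[R]_n) : R :=
  Num.sqrt (\sum_i (v i 0) ^+ 2).

Definition spec_norm_le {R : realType} {p q : nat} (M : 'M[R]_(p, q)) (b : R) : Prop :=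
  forall v : 'cV[R]_q, enorm (M *m v) <= b * enorm v.

Definition jacobian_col {R : realType} {n p : nat}
  (f : 'cV[R]_n -> 'cV[R]_p) (z : 'cV[R]_n) : 'M[R]_(p, n) :=
  \matrix_(i, j) ('d f z (delta_mx j 0 : 'cV[R]_n)) i 0.

Definition C1 {R : realType} {n p : nat} (f : 'cV[R]_n -> 'cV[R]_p) : Prop :=
  (forall z, differentiable f z) /\ continuous (jacobian_col f).

Definition observer_lmi {R : realType} {nx ny : nat}
  (A : 'M[R]_nx) (C : 'M[R]_(ny, nx)) (Q U : 'M[R]_nx) (V : 'M[R]_(nx, ny))
  (alpha beta eta rho : R) : 'M[R]_(nx + nx + ny) :=
  block_mx
    (block_mx ((1 - rho) *: Q - eta *: (C^T *m C)) (U *m A + alpha *: (V *m C))^T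
              (U *m A + alpha *: (V *m C)) (U + U^T - Q))
    (col_mx (0 : 'M[R]_(nx, ny)) (beta *: V))
    (row_mx (0 : 'M[R]_(ny, nx)) (beta *: V^T))
    (eta%:M).

(* Main.v *)
Require Import Defs.
From HB Require Import structures.
From mathcomp Require Import all_boot all_order all_algebra.
From mathcomp Require Import all_classical all_reals all_analysis.
Import Order.TTheory GRing.Theory Num.Theory.
Import numFieldNormedType.Exports.
Local Open Scope ring_scope.

From mathcomp Require Import ring lra.

Lemma diff_jac (R : realType) n p (f : 'cV[R]_n -> 'cV[R]_p) z v :
  'd f z v = jacobian_col f z *m v.
Proof.
have Hv : v = \sum_(j < n) v j 0 *: (delta_mx j 0 : 'cV[R]_n).
  apply/matrixP => i k; rewrite summxE (bigD1 i) //= big1 ?addr0.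
    by rewrite !mxE ord1 !eqxx mulr1.
  by move=> j /negbTE ji; rewrite !mxE eq_sym ji mulr0.
rewrite {1}Hv linear_sum; apply/matrixP => i k; rewrite (ord1 k) summxE !mxE.
apply: eq_bigr => j _; rewrite linearZ /= !mxE mulrC.
by [].
Qed.

Lemma line_derive (R : realType) n p (f : 'cV[R]_n -> 'cV[R]_p) (b d : 'cV[R]_n) (c : R) :
  differentiable f (b + c *: d) ->
  is_derive c 1 (fun t : R => f (b + t *: d)) ('d f (b + c *: d) d).
Proof.
move=> df.
have E : (fun h : R => h^-1 *: (((fun t : R => f (b + t *: d)) \o shift c) (h *: 1) - f (b + c *: d)))
  = (fun h : R => h^-1 *: ((f \o shift (b + c *: d)) (h *: d) - f (b + c *: d))).
  apply/funext => h /=.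
  have e : b + (h%:A + c) *: d = h *: d + (b + c *: d) :> 'cV[R]_n.
    rewrite (_ : h%:A = h); last exact: mulr1.
    by rewrite scalerDl addrCA.
  by rewrite e.
split; first by rewrite /derivable E; exact: diff_derivable.
by rewrite /derive E; exact: deriveE.
Qed.

Lemma line_derive_coord (R : realType) n p (f : 'cV[R]_n -> 'cV[R]_p) (b d : 'cV[R]_n) (c : R) i :
  differentiable f (b + c *: d) ->
  is_derive c 1 (fun t : R => f (b + t *: d) i 0) ('d f (b + c *: d) d i 0).
Proof.
move=> /line_derive [H1 H2].
split; first by move/derivable_mxP : H1; apply.
by rewrite -H2 derive_mx // mxE.
Qed.


Definition dot {R : realType} {n : nat} (u v : 'cV[R]_n) : R := \sum_i u i 0 * v i 0.

Lemma dot_ge0 (R : realType) n (v : 'cV[R]_n) : 0 <= dot v v.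
Proof. by apply: sumr_ge0 => i _; rewrite -expr2 sqr_ge0. Qed.

Lemma enorm_sq (R : realType) n (v : 'cV[R]_n) : enorm v ^+ 2 = dot v v.
Proof.
rewrite /enorm sqr_sqrtr; last by apply: sumr_ge0 => i _; rewrite sqr_ge0.
by apply: eq_bigr => i _; rewrite expr2.
Qed.

Lemma dot2 (R : realType) n (u v : 'cV[R]_n) : 2 * dot u v <= dot u u + dot v v.
Proof.
rewrite -subr_ge0.
have -> : dot u u + dot v v - 2 * dot u v = \sum_i (u i 0 - v i 0) ^+ 2.
  rewrite /dot mulr_sumr -big_split -sumrB /=; apply: eq_bigr => i _; ring.
by apply: sumr_ge0 => i _; rewrite sqr_ge0.
Qed.

Lemma dotC (R : realType) n (u v : 'cV[R]_n) : dot u v = dot v u.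
Proof. by apply: eq_bigr => i _; rewrite mulrC. Qed.

Lemma dotBr (R : realType) n (u v w : 'cV[R]_n) : dot u (v - w) = dot u v - dot u w.
Proof. by rewrite /dot -sumrB; apply: eq_bigr => i _; rewrite !mxE mulrBr. Qed.

Lemma dotZr (R : realType) n (u v : 'cV[R]_n) k : dot u (k *: v) = k * dot u v.
Proof. by rewrite /dot mulr_sumr; apply: eq_bigr => i _; rewrite !mxE mulrCA. Qed.

Lemma mvt_bound (R : realType) n (f : 'cV[R]_n -> 'cV[R]_n) (al be : R) :
  (forall z, differentiable f z) ->
  (forall z, spec_norm_le (jacobian_col f z - al%:M) be) -> 0 <= be ->
  forall a b : 'cV[R]_n,
  dot (f a - f b - al *: (a - b)) (f a - f b - al *: (a - b))
    <= be ^+ 2 * dot (a - b) (a - b).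
Proof.
move=> df hJ be0 a b.
set dl := f a - f b - al *: (a - b); set d := a - b.
pose K := al * dot dl d.
pose h := fun (i : 'I_n) (t : R) => dl i 0 * f (b + t *: d) i 0.
pose phi := (\sum_(i < n) h i) - (K \*: (@id R)).
have hd : forall x : R, is_derive x (1:R) phi
    (\sum_(i < n) dl i 0 * 'd f (b + x *: d) d i 0 - K *: 1).
  move=> x; apply: is_deriveB.
  apply: is_derive_sum => i.
  have -> : h i = dl i 0 \*: (fun t : R => f (b + t *: d) i 0) by apply/funext.
  have H := (is_deriveZ (dl i 0) (@line_derive_coord _ _ _ f b d x i (df (b + x *: d)))).
  exact H.
have := @MVT R phi (fun x => \sum_(i < n) dl i 0 * 'd f (b + x *: d) d i 0 - K *: 1) 0 1 ltr01
   (fun x _ => hd x).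
case.
  apply: derivable_within_continuous => x _.
  by have [] := hd x.
move=> c _.
have phiE t : phi t = \sum_(i < n) dl i 0 * f (b + t *: d) i 0 - K * t.
  by rewrite /phi /= fct_sumE.
rewrite !phiE scale1r scale0r addr0 mulr1 mulr0 subr0 subr0 mulr1.
have -> : b + d = a by rewrite /d addrC subrK.
rewrite (_ : K%:A = K); last exact: mulr1.
set z := b + c *: d.
set v := (jacobian_col f z - al%:M) *m d.
have Hv : \sum_(i < n) dl i 0 * (jacobian_col f z *m d) i 0 - K = dot dl v.
  by rewrite /v mulmxBl mul_scalar_mx dotBr dotZr.
have Hd : \sum_(i < n) dl i 0 * f a i 0 - K - \sum_(i < n) dl i 0 * f b i 0 = dot dl dl.
  rewrite {3}/dl dotBr dotZr addrAC; congr (_ - _).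
  by rewrite -sumrB; apply: eq_bigr => i _; rewrite !mxE; ring.
rewrite Hd diff_jac Hv => E.
have H2 := @dot2 R n dl v.
have Hvv : dot v v <= be ^+ 2 * dot d d.
  rewrite -!enorm_sq -exprMn.
  rewrite ler_pXn2r // ?nnegrE ?mulr_ge0 ?sqrtr_ge0 //.
  exact: hJ.
lra.
Qed.

Definition sc {R : realType} (X : 'M[R]_1) : R := X 0 0.
Lemma scD (R : realType) (X Y : 'M[R]_1) : sc (X + Y) = sc X + sc Y.
Proof. by rewrite /sc mxE. Qed.
Lemma scN (R : realType) (X : 'M[R]_1) : sc (- X) = - sc X.
Proof. by rewrite /sc mxE. Qed.
Lemma scZ (R : realType) (X : 'M[R]_1) k : sc (k *: X) = k * sc X.
Proof. by rewrite /sc mxE. Qed.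
Lemma scT (R : realType) (X : 'M[R]_1) : sc X^T = sc X.
Proof. by rewrite /sc mxE. Qed.
Lemma sc0 (R : realType) : sc (0 : 'M[R]_1) = 0.
Proof. by rewrite /sc mxE. Qed.

Lemma lmi_quad (R : realType) nx ny (A : 'M[R]_nx) (C : 'M[R]_(ny, nx)) (Q U : 'M[R]_nx)
  (V : 'M[R]_(nx, ny)) al be eta rho (e s : 'cV[R]_nx) (w : 'cV[R]_ny) :
  let z := col_mx (col_mx e s) w in
  let G := U *m A + al *: (V *m C) in
  sc (z^T *m observer_lmi A C Q U V al be eta rho *m z) =
  (1 - rho) * sc (e^T *m Q *m e) - eta * sc ((C *m e)^T *m (C *m e))
  + 2 * sc (s^T *m G *m e) + 2 * sc (s^T *m U *m s) - sc (s^T *m Q *m s)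
  + 2 * be * sc (s^T *m V *m w) + eta * sc (w^T *m w).
Proof.
move=> z G.
rewrite /z /observer_lmi -/G !tr_col_mx mul_row_block mul_row_block !mul_mx_row.
rewrite mulmx0 add_row_mx !mul_row_col mulmx0 add0r addr0.
rewrite !mulmxDl !scD.
have h1 : sc (e^T *m ((1 - rho) *: Q - eta *: (C^T *m C)) *m e) =
   (1 - rho) * sc (e^T *m Q *m e) - eta * sc ((C *m e)^T *m (C *m e)).
  rewrite mulmxBr mulmxBl scD scN -!scalemxAr -!scalemxAl !scZ.
  by rewrite trmx_mul !mulmxA.
have h2 : sc (e^T *m G^T *m s) = sc (s^T *m G *m e).
  by rewrite -scT !trmx_mul !trmxK mulmxA.
have h3 : sc (s^T *m (U + U^T - Q) *m s) = 2 * sc (s^T *m U *m s) - sc (s^T *m Q *m s).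
  rewrite mulmxBr mulmxDr !mulmxBl !mulmxDl !scD scN.
  have -> : sc (s^T *m U^T *m s) = sc (s^T *m U *m s).
    by rewrite -scT !trmx_mul !trmxK mulmxA.
  ring.
have h4 : sc (w^T *m (be *: V^T) *m s) = be * sc (s^T *m V *m w).
  by rewrite -scalemxAr -scalemxAl scZ -scT !trmx_mul !trmxK mulmxA.
have h5 : sc (s^T *m (be *: V) *m w) = be * sc (s^T *m V *m w).
  by rewrite -scalemxAr -scalemxAl scZ.
have h6 : sc (w^T *m eta%:M *m w) = eta * sc (w^T *m w).
  by rewrite mul_mx_scalar -scalemxAl scZ.
rewrite h1 h2 h3 h4 h5 h6; ring.
Qed.


Lemma dot_sc (R : realType) n (u v : 'cV[R]_n) : dot u v = sc (u^T *m v).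
Proof. by rewrite /sc /dot !mxE; apply: eq_bigr => i _; rewrite mxE. Qed.

Lemma dot0 (R : realType) n (v : 'cV[R]_n) : dot v v <= 0 -> v = 0.
Proof.
move=> h; have h0 : dot v v = 0 by apply/eqP; rewrite eq_le h /=; exact: dot_ge0.
apply/matrixP => i j; rewrite (ord1 j) mxE.
move/eqP: h0; rewrite /dot psumr_eq0 => [/allP /(_ i) H|i' _]; last first.
  by rewrite -expr2 sqr_ge0.
by move: (H (mem_index_enum i)); rewrite /= mulf_eq0 orbb => /eqP.
Qed.

Lemma trNmul (R : realType) n p (v : 'cV[R]_n) (X : 'M[R]_(n, p)) :
  (- v)^T *m X = - (v^T *m X).
Proof.
apply/matrixP => i j; rewrite !mxE -sumrN; apply: eq_bigr => k _.
by rewrite !mxE mulNr.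
Qed.

Lemma mulNv (R : realType) n (X : 'M[R]_(1, n)) (v : 'cV[R]_n) :
  X *m (- v) = - (X *m v).
Proof. exact: mulmxN. Qed.

Theorem mainTheorem4 (R : realType) (nx m ny : nat)
  (A : 'M[R]_nx) (B : 'M[R]_(nx, m)) (C : 'M[R]_(ny, nx)) (D : 'M[R]_(ny, m))
  (mu_y nu_y : R) (Hmu : 0 < mu_y) (Hmunu : mu_y <= nu_y)
  (Q U : 'M[R]_nx) (V : 'M[R]_(nx, ny)) (eta rho_o : R)
  (HQ : posdef Q) (Heta : 0 < eta) (Hrho0 : 0 < rho_o) (Hrho1 : rho_o < 1)
  (HLMI : posdef (observer_lmi A C Q U V
                    ((nu_y + mu_y) / 2) ((nu_y - mu_y) / 2) eta rho_o)) :
  U \in unitmx /\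
  let alpha_y := (nu_y + mu_y) / 2 in
  let beta_y := (nu_y - mu_y) / 2 in
  let L := invmx U *m V in
  forall (S_u : 'cV[R]_m -> 'cV[R]_m) (S_y : 'cV[R]_ny -> 'cV[R]_ny),
  C1 S_y ->
  (forall z, spec_norm_le (jacobian_col S_y z - alpha_y%:M) beta_y) ->
  forall (u : nat -> 'cV[R]_m) (x xh : nat -> 'cV[R]_nx),
  let y := fun k => S_y (C *m x k + D *m S_u (u k)) in
  let yh := fun k => S_y (C *m xh k + D *m S_u (u k)) in
  (forall k, x k.+1 = A *m x k + B *m S_u (u k)) ->
  (forall k, xh k.+1 = A *m xh k + B *m S_u (u k) + L *m (yh k - y k)) ->
  (xh 0%N = x 0%N -> forall k, xh k = x k) /\
  (forall Qh : 'M[R]_nx, possemidef Qh -> Qh *m Qh = Q ->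
     forall k, enorm (Qh *m (xh k - x k))
               <= Num.sqrt (1 - rho_o) ^+ k * enorm (Qh *m (xh 0%N - x 0%N))).

Proof.
set al := (nu_y + mu_y) / 2; set be := (nu_y - mu_y) / 2.
have be0 : 0 <= be by rewrite /be divr_ge0 // subr_ge0.
set M := observer_lmi A C Q U V al be eta rho_o.
have HMq : forall z, 0 <= sc (z^T *m M *m z).
  move=> z; have [->|nz] := eqVneq z 0.
    by rewrite trmx0 !mul0mx sc0.
  by apply: ltW; have [_ ] := HLMI; apply.
have Qpos : forall z, z != 0 -> 0 < sc (z^T *m Q *m z) by case: HQ.
have Qge0 : forall z, 0 <= sc (z^T *m Q *m z).
  move=> z; have [->|nz] := eqVneq z 0; last exact: ltW (Qpos z nz).
  by rewrite trmx0 !mul0mx sc0.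
have Uinj : forall s : 'cV[R]_nx, U *m s = 0 -> s = 0.
  move=> s Us0; apply/eqP; apply/negPn/negP => nz.
  have := HMq (col_mx (col_mx 0 s) 0).
  rewrite /M lmi_quad.
  rewrite !trmx0 !mul0mx !mulmx0 !sc0 -(mulmxA s^T U s) Us0 mulmx0 sc0.
  have := Qpos s nz; lra.
have Uunit : U \in unitmx.
  rewrite -unitmx_tr -row_free_unit; apply: inj_row_free => v vU0.
  apply: trmx_inj; rewrite trmx0; apply: Uinj.
  by rewrite -[U]trmxK -trmx_mul vU0 trmx0.
split => //.
move=> alpha_y beta_y L S_u S_y [Sdiff _] HJ u x xh y yh Hx Hxh.
split.
  move=> H0; elim => // k IH.
  by rewrite Hxh Hx /yh /y IH subrr mulmx0 addr0.
move=> Qh [QhT _] QhQ.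
pose e k := xh k - x k.
have step : forall k, sc ((e k.+1)^T *m Q *m e k.+1) <= (1 - rho_o) * sc ((e k)^T *m Q *m e k).
  move=> k.
  set s0 := S_u (u k).
  set a := C *m xh k + D *m s0; set b := C *m x k + D *m s0.
  have ab : a - b = C *m e k.
    by rewrite /a /b /e mulmxBr opprD addrACA subrr addr0.
  have mvt := @mvt_bound R ny S_y al be Sdiff HJ be0 a b.
  set dl := S_y a - S_y b - al *: (a - b) in mvt.
  have e1E : e k.+1 = A *m e k + L *m (S_y a - S_y b).
    rewrite /e Hxh Hx !mulmxBr; apply/matrixP => i j; rewrite !mxE; ring.
  set w := be^-1 *: dl.
  have hbw : be *: w = dl.
    have [be00|bn0] := eqVneq be 0.
      rewrite /w be00 scale0r; apply/esym/dot0.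
      by move: mvt; rewrite be00 expr0n /= mul0r.
    by rewrite /w scalerA mulfV // scale1r.
  have hww : dot w w <= dot (C *m e k) (C *m e k).
    rewrite -ab /w dotZr dotC dotZr mulrA.
    have [be00|bn0] := eqVneq be 0.
      by rewrite be00 invr0 !mul0r; exact: dot_ge0.
    apply: (le_trans (ler_wpM2l _ mvt)); first by rewrite -expr2 sqr_ge0.
    by rewrite mulrA -expr2 -exprMn mulVf // expr1n mul1r.
  set G := U *m A + al *: (V *m C).
  have Ue1 : U *m e k.+1 = G *m e k + be *: (V *m w).
    have yhE : yh k - y k = al *: (C *m e k) + dl by rewrite /dl -ab [RHS]addrC subrK.
    rewrite e1E yhE -hbw; clearbody w e; clear hbw.
    rewrite mulmxDr /L !mulmxA mulmxV // mul1mx.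
    rewrite (mulmxDr V) !scalemxAr /G mulmxDl -!scalemxAl !mulmxA addrA.
    by rewrite scalemxAr.
  have := HMq (col_mx (col_mx (e k) (- e k.+1)) w); rewrite /M lmi_quad -/G.
  have k1 : sc ((- e k.+1)^T *m G *m e k) + be * sc ((- e k.+1)^T *m V *m w)
            = - sc ((e k.+1)^T *m U *m e k.+1).
    rewrite -scZ -scD -!mulmxA (scalemxAr be) -mulmxDr -Ue1.
    by rewrite trNmul scN.
  have k2 : sc ((- e k.+1)^T *m U *m - e k.+1) = sc ((e k.+1)^T *m U *m e k.+1).
    by rewrite trNmul mulNmx mulmxN opprK.
  have k3 : sc ((- e k.+1)^T *m Q *m - e k.+1) = sc ((e k.+1)^T *m Q *m e k.+1).
    by rewrite trNmul mulNmx mulmxN opprK.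
  rewrite k2 k3 -!dot_sc.
  have k4 : eta * dot w w <= eta * dot (C *m e k) (C *m e k).
    by rewrite ler_wpM2l // ltW.
  lra.
have iter : forall k, sc ((e k)^T *m Q *m e k) <= (1 - rho_o) ^+ k * sc ((e 0%N)^T *m Q *m e 0%N).
  elim => [|k IH]; first by rewrite expr0 mul1r.
  apply: (le_trans (step k)); rewrite exprS -mulrA ler_wpM2l //; lra.
have nE : forall v, enorm (Qh *m v) = Num.sqrt (sc (v^T *m Q *m v)).
  move=> v; rewrite /enorm; congr Num.sqrt.
  rewrite -QhQ -{2}QhT !mulmxA -trmx_mul -mulmxA /sc mxE.
  by apply: eq_bigr => i _; rewrite !mxE expr2.
have sqX : forall (a : R) n, 0 <= a -> Num.sqrt (a ^+ n) = Num.sqrt a ^+ n.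
  move=> a n a0; elim: n => [|n IH]; first by rewrite !expr0 sqrtr1.
  by rewrite !exprS sqrtrM // IH.
move=> k; rewrite !nE -/(e k) -/(e 0%N).
rewrite -sqX; last lra.
rewrite -sqrtrM; last by apply: exprn_ge0; lra.
rewrite ler_sqrt; first exact: iter.
by apply: mulr_ge0; [apply: exprn_ge0; lra | exact: Qge0].
Qed.
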